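(* Let $G$ be the graph on vertex set $\{a,b,p,q,x,z\}$ with edges $\{a,b\},\{a,x\},\{b,x\},\{a,p\},\{b,q\},\{p,z\},\{x,z\},\{q,z\}$, and let $I(G)\subseteq K[a,b,p,q,x,z]$ ($K$ a field) be its edge ideal. Then $I(G)^s$ has linear quotients for all $s\ge 2$.
   Context: The edge ideal is generated by the monomials $uv$ for the edges $\{u,v\}$ of $G$. A monomial ideal generated in a single degree has linear quotients if its minimal monomial generators can be ordered $u_1>\cdots>u_r$ so that each colon ideal $(u_1,\ldots,u_i):u_{i+1}$, $1\le i<r$, is generated by a subset of the variables. *)

(* Defs.v *)
(* Monomials in the 6 variables a,b,p,q,x,z of K[a,b,p,q,x,z]
   are represented by exponent vectors. Monomial ideals are handled through
   their sets of monomials (a monomial ideal is determined by the monomials it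
   contains, independently of the field K). *)
From mathcomp Require Import all_boot.
Set Implicit Arguments. Unset Strict Implicit. Unset Printing Implicit Defensive.

Definition monomial := {ffun 'I_6 -> nat}.

Definition mdiv (m1 m2 : monomial) : Prop := forall i, m1 i <= m2 i.
Definition mmul (m1 m2 : monomial) : monomial := [ffun i => m1 i + m2 i].
Definition mone : monomial := [ffun _ => 0].
Definition var (i : 'I_6) : monomial := [ffun j => nat_of_bool (j == i)].

Definition va : 'I_6 := @Ordinal 6 0 isT.
Definition vb : 'I_6 := @Ordinal 6 1 isT.
Definition vp : 'I_6 := @Ordinal 6 2 isT.
Definition vq : 'I_6 := @Ordinal 6 3 isT.
Definition vx : 'I_6 := @Ordinal 6 4 isT.
Definition vz : 'I_6 := @Ordinal 6 5 isT.

Definition edgesG : seq ('I_6 * 'I_6) :=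
  [:: (va, vb); (va, vx); (vb, vx); (va, vp); (vb, vq); (vp, vz); (vx, vz); (vq, vz)].

Definition edge_mono (e : 'I_6 * 'I_6) : monomial := mmul (var e.1) (var e.2).

Definition in_edge_ideal_pow (s : nat) (m : monomial) : Prop :=
  exists es : seq ('I_6 * 'I_6),
    [/\ size es = s, all (fun e => e \in edgesG) es &
        mdiv (foldr mmul mone (map edge_mono es)) m].

Definition min_gen (P : monomial -> Prop) (m : monomial) : Prop :=
  P m /\ forall m', P m' -> mdiv m' m -> m' = m.

(* (gens) : u is generated by a subset S of the variables:
   a monomial m lies in (gens) : u  (i.e. m*u lies in the ideal (gens))
   iff m is divisible by some variable in S. *)
Definition colon_generated_by_vars (gens : seq monomial) (u : monomial) : Prop :=
  exists S : {set 'I_6}, forall m : monomial,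
    (exists2 g, g \in gens & mdiv g (mmul m u)) <-> (exists2 k, k \in S & 0 < m k).

(* linear quotients: an ordering u_1,...,u_r of the minimal monomial
   generators such that each (u_1,...,u_i) : u_{i+1} is generated by variables
   (0-indexed below: (us_0..us_{i-1}) : us_i for 0 < i < r). *)
Definition has_linear_quotients (P : monomial -> Prop) : Prop :=
  exists us : seq monomial,
    [/\ uniq us, (forall m, m \in us <-> min_gen P m) &
        forall i, 0 < i < size us ->
          colon_generated_by_vars (take i us) (nth mone us i)].

(* Main.v *)
Require Import Defs.
From mathcomp Require Import all_boot zify.
Set Implicit Arguments. Unset Strict Implicit. Unset Printing Implicit Defensive.


Lemma ord6_cases (P : 'I_6 -> Prop) :
  P va -> P vb -> P vp -> P vq -> P vx -> P vz -> forall i, P i.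
Proof.
move=> Ha Hb Hp Hq Hx Hz [[|[|[|[|[|[|n]]]]]] Hi] //.
- by rewrite (_ : Ordinal Hi = va) //; apply: val_inj.
- by rewrite (_ : Ordinal Hi = vb) //; apply: val_inj.
- by rewrite (_ : Ordinal Hi = vp) //; apply: val_inj.
- by rewrite (_ : Ordinal Hi = vq) //; apply: val_inj.
- by rewrite (_ : Ordinal Hi = vx) //; apply: val_inj.
- by rewrite (_ : Ordinal Hi = vz) //; apply: val_inj.
Qed.

Lemma mono_eq (m1 m2 : monomial) :
  m1 va = m2 va -> m1 vb = m2 vb -> m1 vp = m2 vp -> m1 vq = m2 vq ->
  m1 vx = m2 vx -> m1 vz = m2 vz -> m1 = m2.
Proof. by move=> *; apply/ffunP; apply: ord6_cases. Qed.

Lemma mdivE (m1 m2 : monomial) : mdiv m1 m2 <->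
  [/\ m1 va <= m2 va, m1 vb <= m2 vb, m1 vp <= m2 vp, m1 vq <= m2 vq &
      (m1 vx <= m2 vx /\ m1 vz <= m2 vz)].
Proof.
split; first by move=> H; rewrite !H.
by case=> ? ? ? ? [? ?]; apply: ord6_cases.
Qed.

Definition deg (m : monomial) := m va + m vb + m vp + m vq + m vx + m vz.

Definition good6 (a b p q x z : nat) : Prop :=
  a <= b+p+x /\ b <= a+q+x /\ p <= a+z /\ q <= b+z /\ x <= a+b+z /\
      z <= p+q+x /\ a+q <= b+p+x+z /\ a+z <= b+p+q+x /\ b+p <= a+q+x+z /\
      b+z <= a+p+q+x /\ p+q+x <= a+b+z.

Definition goodm (m : monomial) := good6 (m va) (m vb) (m vp) (m vq) (m vx) (m vz).

Definition prod (es : seq ('I_6 * 'I_6)) : monomial := foldr mmul mone (map edge_mono es).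

Lemma mmulE (m1 m2 : monomial) i : mmul m1 m2 i = m1 i + m2 i.
Proof. by rewrite ffunE. Qed.

Lemma prod_cons e es : prod (e :: es) = mmul (edge_mono e) (prod es).
Proof. by []. Qed.

Lemma good_prod es : all (fun e => e \in edgesG) es ->
  goodm (prod es) /\ deg (prod es) = 2 * size es.
Proof.
rewrite /goodm /deg /good6.
elim: es => [|e es IH] /=; first by rewrite !ffunE.
case/andP=> He /IH; rewrite prod_cons !mmulE; move: (prod es) => P.
move: He; rewrite !inE.
by do 7 (case/orP; first by move/eqP->; rewrite /edge_mono ?mmulE !ffunE /=; lia);
  move/eqP->; rewrite /edge_mono ?mmulE !ffunE /=; lia.
Qed.


Definition msub (m1 m2 : monomial) : monomial := [ffun i => m1 i - m2 i].

Ltac leaf1 i j := exists (i, j); [by rewrite !inE | split; [apply/mdivE | rewrite /goodm /good6]; rewrite /edge_mono /msub ?mmulE !ffunE /=; repeat split; lia].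

Lemma dec_m m s : goodm m -> deg m = 2 * s.+1 ->
  exists2 e, e \in edgesG & mdiv (edge_mono e) m /\ goodm (msub m (edge_mono e)).
Proof.
rewrite /goodm /good6 /deg => G D.
(case: (boolP ((m vp + m vq + m vx) + 1 <= (m va + m vb + m vz))) => ?; [ leaf1 va vb | (case: (boolP (1 <= m va)) => ?; [ (case: (boolP (1 <= m vp)) => ?; [ leaf1 va vp | leaf1 va vx ]) | (case: (boolP (1 <= m vp)) => ?; [ leaf1 vp vz | (case: (boolP (1 <= m vb)) => ?; [ (case: (boolP (1 <= m vq)) => ?; [ leaf1 vb vq | leaf1 vb vx ]) | (case: (boolP (1 <= m vq)) => ?; [ leaf1 vq vz | leaf1 vx vz ]) ]) ]) ]) ]).
Qed.


Definition isprod s m := exists es, [/\ size es = s, all (fun e => e \in edgesG) es & prod es = m].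

Lemma prod_inv s m : goodm m -> deg m = 2 * s -> isprod s m.
Proof.
elim: s m => [|s IH] m G D.
  exists [::]; split => //; apply: mono_eq; rewrite /= ffunE; move: D; rewrite /deg; lia.
have [e He [Hd Hg]] := dec_m G D.
have Dm : deg (msub m (edge_mono e)) = 2 * s.
  move: Hd D; rewrite mdivE /deg /msub !ffunE.
  move: He; rewrite !inE.
  by do 7 (case/orP; first by move/eqP->; rewrite /edge_mono ?mmulE ?ffunE /= => -[? ? ? ? [? ?]] ?; lia);
    move/eqP->; rewrite /edge_mono ?mmulE ?ffunE /= => -[? ? ? ? [? ?]] ?; lia.
have [es [Hs Ha Hp]] := IH _ Hg Dm.
exists (e :: es); split; rewrite /= ?Hs ?He ?Ha //.
rewrite prod_cons Hp; apply/ffunP => i; rewrite !ffunE.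
have := Hd i; rewrite !ffunE; exact: subnKC.
Qed.

Lemma isprodE s m : isprod s m <-> goodm m /\ deg m = 2 * s.
Proof.
split; last by case; apply: prod_inv.
by case=> es [<- Ha <-]; apply: good_prod.
Qed.

Lemma mdiv_deg m1 m2 : mdiv m1 m2 -> deg m1 <= deg m2 ?= iff (m1 == m2).
Proof.
move=> /mdivE [h1 h2 h3 h4 [h5 h6]]; split; first by rewrite /deg; lia.
apply/eqP/eqP => [E|->] //; apply: mono_eq; move: E; rewrite /deg; lia.
Qed.

Lemma in_pow_deg s m : in_edge_ideal_pow s m -> 2 * s <= deg m.
Proof.
case=> es [Hs Ha Hd]; rewrite -Hs; have [_ <-] := good_prod Ha.
exact: (mdiv_deg Hd).1.
Qed.

Lemma min_genE s m : min_gen (in_edge_ideal_pow s) m <-> isprod s m.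
Proof.
split.
  case=> [[es [Hs Ha Hd]] Hmin]; exists es; split => //.
  apply: Hmin => //; exists es; split => //; by move=> i.
case=> es [Hs Ha Hp]; split.
  by exists es; split => // i; rewrite -/(prod es) Hp.
move=> m' Hm' Hd.
have h1 := in_pow_deg Hm'.
have [_ h2] := good_prod Ha; rewrite Hp Hs in h2.
have [le eq] := mdiv_deg Hd.
by apply/eqP; rewrite -eq; apply/eqP; lia.
Qed.


Fixpoint ltlex (s t : seq nat) : bool :=
  match s, t with
  | x :: s', y :: t' => (x < y) || ((x == y) && ltlex s' t')
  | _, _ => false
  end.

Definition key (u : monomial) : seq nat :=
  if 0 < u va then [:: u va; u vb; u vp; u vx; u vq; u vz; 0]
  else if 0 < u vb then [:: u va; u vb; u vq; u vx; u vp; u vz; 0]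
  else [:: u va; u vb; u vx; minn (u vp) (u vq); u vp; u vq; u vz].

Definition ltm (u w : monomial) : bool := ltlex (key u) (key w).

Definition swap (u : monomial) (l k : 'I_6) : monomial :=
  [ffun i => u i + (i == l) - (i == k)].

Lemma ltmP (u g : monomial) : 0 < u va -> ltm u g =
  ltlex [:: u va; u vb; u vp; u vx; u vq; u vz] [:: g va; g vb; g vp; g vx; g vq; g vz].
Proof.
move=> h; rewrite /ltm /key h /=; case: ifPn => hg /=; first by apply/idP/idP; lia.
case: ifPn => hg2 /=; apply/idP/idP; lia.
Qed.

Lemma ltmQ (u g : monomial) : u va = 0 -> 0 < u vb -> ltm u g =
  ltlex [:: u va; u vb; u vq; u vx; u vp; u vz] [:: g va; g vb; g vq; g vx; g vp; g vz].
Proof.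
move=> h h2; rewrite /ltm /key h h2 /=; case: ifPn => hg /=; first by apply/idP/idP; lia.
case: ifPn => hg2 /=; first by apply/idP/idP; lia.
apply/idP/idP; lia.
Qed.

Lemma ltmZ (u g : monomial) : u va = 0 -> u vb = 0 -> ltm u g =
  ltlex [:: u va; u vb; u vx; minn (u vp) (u vq); u vp; u vq; u vz]
        [:: g va; g vb; g vx; minn (g vp) (g vq); g vp; g vq; g vz].
Proof.
move=> h h2; rewrite /ltm /key h h2 /=; case: ifPn => hg /=; first by apply/idP/idP; lia.
case: ifPn => hg2 /=; first by apply/idP/idP; lia.
apply/idP/idP; lia.
Qed.


Definition exch_concl s (u g : monomial) : Prop :=
  exists l k, [/\ u l < g l, 0 < u k, goodm (swap u l k), deg (swap u l k) = 2 * s &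
                  ltm u (swap u l k)].

Ltac leafP l k := exists l, k; rewrite ltmP // /goodm /good6 /deg /swap !ffunE /=; split; lia.

Lemma exchP s (u g : monomial) : 0 < u va -> goodm u -> goodm g -> deg u = 2 * s -> deg g = 2 * s ->
  2 <= s -> ltm u g -> exch_concl s u g.
Proof.
move=> Hua Gu Gg Du Dg s2 Lt; rewrite /exch_concl.
rewrite (ltmP _ Hua) /= in Lt; rewrite /goodm /good6 /deg in Gu Gg Du Dg.
(case: (boolP (u vb < g vb)) => ?; [ (case: (boolP ((u vp) + 2 <= (u va + u vz))) => ?; [ (case: (boolP (1 <= u vz)) => ?; [ (case: (boolP ((u vb + u vp) + 1 <= (u va + u vq + u vx + u vz))) => ?; [ leafP vb vz | (case: (boolP (u vq < g vq)) => ?; [ leafP vq vz | (case: (boolP (u va < g va)) => ?; [ leafP va vz | (case: (boolP (u vx < g vx)) => ?; [ leafP vx vz | leafP vb vp ]) ]) ]) ]) | (case: (boolP (1 <= u vp)) => ?; [ leafP vb vp | leafP vb vx ]) ]) | (case: (boolP ((u vb) + 1 <= (u va + u vq + u vx))) => ?; [ (case: (boolP (1 <= u vp)) => ?; [ leafP vb vp | leafP vb vx ]) | (case: (boolP (u va < g va)) => ?; [ leafP va vz | (case: (boolP (u vq < g vq)) => ?; [ leafP vq vz | leafP vx vz ]) ]) ]) ]) | (case: (boolP (u vx < g vx)) => ?; [ (case: (boolP (1 <= u vq)) => ?; [ leafP vx vq | (case: (boolP (1 <= u vz)) => ?; [ (case: (boolP (u va < g va)) => ?; [ leafP va vz | leafP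 vx vz ]) | leafP va vb ]) ]) | (case: (boolP (u vp < g vp)) => ?; [ (case: (boolP ((u vb + u vp) + 1 <= (u va + u vq + u vx + u vz))) => ?; [ (case: (boolP (1 <= u vq)) => ?; [ leafP vp vq | leafP vp vx ]) | (case: (boolP (1 <= u vq)) => ?; [ leafP va vq | (case: (boolP (1 <= u vx)) => ?; [ leafP va vb | leafP va vz ]) ]) ]) | (case: (boolP (1 <= u vz)) => ?; [ (case: (boolP (u va < g va)) => ?; [ (case: (boolP (g vq < u vq)) => ?; [ leafP va vq | leafP va vz ]) | leafP vq vz ]) | (case: (boolP (1 <= u vq)) => ?; [ leafP va vq | leafP va vb ]) ]) ]) ]) ]).
Qed.


Ltac leafQ l k := exists l, k; rewrite ltmQ // /goodm /good6 /deg /swap !ffunE /=; split; lia.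

Lemma exchQ s (u g : monomial) : u va = 0 -> 0 < u vb -> goodm u -> goodm g -> deg u = 2 * s -> deg g = 2 * s ->
  2 <= s -> ltm u g -> exch_concl s u g.
Proof.
move=> Hua Hub Gu Gg Du Dg s2 Lt; rewrite /exch_concl.
rewrite (ltmQ _ Hua Hub) /= in Lt; rewrite /goodm /good6 /deg in Gu Gg Du Dg.
(case: (boolP (1 <= u vq)) => ?; [ (case: (boolP (u va < g va)) => ?; [ leafQ va vq | (case: (boolP (u vb < g vb)) => ?; [ (case: (boolP ((u vb) + 1 <= (u va + u vq + u vx))) => ?; [ leafQ vb vz | (case: (boolP (u vq < g vq)) => ?; [ leafQ vq vp | leafQ vx vp ]) ]) | (case: (boolP (u vx < g vx)) => ?; [ leafQ vx vp | (case: (boolP (1 <= u vp)) => ?; [ leafQ vq vp | leafQ vq vx ]) ]) ]) ]) | (case: (boolP (u va < g va)) => ?; [ leafQ va vb | (case: (boolP (u vq < g vq)) => ?; [ leafQ vq vx | (case: (boolP (u vx < g vx)) => ?; [ leafQ vx vp | leafQ vb vz ]) ]) ]) ]).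
Qed.


Ltac leafZ l k := exists l, k; rewrite ltmZ // /goodm /good6 /deg /swap !ffunE /=; split; lia.

Lemma exchZ s (u g : monomial) : u va = 0 -> u vb = 0 -> goodm u -> goodm g -> deg u = 2 * s -> deg g = 2 * s ->
  2 <= s -> ltm u g -> exch_concl s u g.
Proof.
move=> Hua Hub Gu Gg Du Dg s2 Lt; rewrite /exch_concl.
rewrite (ltmZ _ Hua Hub) /= in Lt; rewrite /goodm /good6 /deg in Gu Gg Du Dg.
(case: (boolP (u va < g va)) => ?; [ (case: (boolP ((u va) + 1 <= (u vb + u vp + u vx))) => ?; [ leafZ va vz | (case: (boolP (u vb < g vb)) => ?; [ leafZ vb vz | (case: (boolP (u vp < g vp)) => ?; [ leafZ vp vq | leafZ vx vq ]) ]) ]) | (case: (boolP (u vb < g vb)) => ?; [ (case: (boolP ((u vb) + 1 <= (u va + u vq + u vx))) => ?; [ leafZ vb vz | (case: (boolP (u vq < g vq)) => ?; [ leafZ vq vp | leafZ vx vp ]) ]) | (case: (boolP (u vp < g vp)) => ?; [ (case: (boolP (u vx < g vx)) => ?; [ leafZ vx vq | leafZ vp vq ]) | (case: (boolP (1 <= u vp)) => ?; [ (case: (boolP (u vx < g vx)) => ?; [ leafZ vx vp | leafZ vq vp ]) | leafZ vx vq ]) ]) ]) ]).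
Qed.


Lemma exch s (u g : monomial) : goodm u -> goodm g -> deg u = 2 * s -> deg g = 2 * s ->
  2 <= s -> ltm u g -> exch_concl s u g.
Proof.
case: (posnP (u va)) => ha; last exact: exchP.
case: (posnP (u vb)) => hb; first exact: exchZ.
exact: exchQ.
Qed.

Lemma ltlex_irr t : ltlex t t = false.
Proof. by elim: t => //= x t ->; rewrite ltnn andbF. Qed.

Lemma ltlex_trans t1 t2 t3 : ltlex t1 t2 -> ltlex t2 t3 -> ltlex t1 t3.
Proof.
elim: t1 t2 t3 => [|x t1 IH] [|y t2] [|z t3] //=.
case/orP=> [h1|/andP[/eqP e1 h1]]; case/orP=> [h2|/andP[/eqP e2 h2]].
- by rewrite (ltn_trans h1 h2).
- by rewrite -e2 h1.
- by rewrite e1 h2.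
- by rewrite e1 e2 eqxx (IH _ _ h1 h2) orbT.
Qed.

Lemma ltlex_total t1 t2 : size t1 = size t2 -> t1 != t2 -> ltlex t1 t2 || ltlex t2 t1.
Proof.
elim: t1 t2 => [|x t1 IH] [|y t2] //= [] hs hne.
case: (ltngtP x y) => //= hxy; subst y.
rewrite ?eqxx /=; apply: IH => //.
by apply: contra hne => /eqP ->.
Qed.

Lemma size_key u : size (key u) = 7.
Proof. by rewrite /key; case: ifP => //; case: ifP. Qed.

Lemma key_inj u w : key u = key w -> u = w.
Proof.
rewrite /key; case: ifPn => h1; case: ifPn => h2; try case: ifPn => h3; try case: ifPn => h4;
  case => *; apply: mono_eq; lia.
Qed.

Lemma ltm_irr u : ltm u u = false.
Proof. exact: ltlex_irr. Qed.

Lemma ltm_trans u v w : ltm u v -> ltm v w -> ltm u w.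
Proof. exact: ltlex_trans. Qed.

Lemma ltm_total u w : u != w -> ltm u w || ltm w u.
Proof.
move=> h; apply: ltlex_total; first by rewrite !size_key.
by apply: contra h => /eqP /key_inj ->.
Qed.

Definition geR (x y : monomial) := ~~ ltm x y.

Lemma geR_total : total geR.
Proof.
move=> x y; rewrite /geR -negb_and; apply/negP => /andP[h1 h2].
by have := ltm_trans h1 h2; rewrite ltm_irr.
Qed.

Lemma geR_trans : transitive geR.
Proof.
move=> y x z; rewrite /geR => h1 h2; apply/negP => h3.
case: (eqVneq x y) => [exy|nxy]; first by subst; rewrite h3 in h2.
case/orP: (ltm_total nxy) => h; first by rewrite h in h1.
by rewrite (ltm_trans h h3) in h2.
Qed.

Lemma geR_refl : reflexive geR.
Proof. by move=> x; rewrite /geR ltm_irr. Qed.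

Fixpoint allseqs n : seq (seq ('I_6 * 'I_6)) :=
  if n is n'.+1 then [seq e :: t | e <- edgesG, t <- allseqs n'] else [:: [::]].

Lemma allseqsS n : allseqs n.+1 = [seq e :: t | e <- edgesG, t <- allseqs n].
Proof. by []. Qed.

Lemma mem_allseqs n t : (t \in allseqs n) = (size t == n) && all (fun e => e \in edgesG) t.
Proof.
elim: n t => [|n IH] [|e t] //; rewrite allseqsS.
  by apply/negbTE/allpairsP => -[[x y] [_ _]].
rewrite [size _]/= [all _ _]/= eqSS.
apply/allpairsP/andP => [[[e' t'] /= [h1 h2 [-> ->]]]|[h1 /andP[h2 h3]]].
  by move: h2; rewrite IH => /andP[-> ->]; rewrite h1.
by exists (e, t); split => //=; rewrite IH h1 h3.
Qed.


Definition mdivb (m1 m2 : monomial) := [forall i, m1 i <= m2 i].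
Lemma mdivbP m1 m2 : reflect (mdiv m1 m2) (mdivb m1 m2).
Proof. exact: forallP. Qed.

Definition gens s := sort geR (undup (map prod (allseqs s))).

Lemma mem_gens s m : (m \in gens s) <-> isprod s m.
Proof.
rewrite mem_sort mem_undup; split.
  by case/mapP => es; rewrite mem_allseqs => /andP[/eqP h1 h2] ->; exists es.
case=> es [h1 h2 <-]; apply/mapP; exists es => //.
by rewrite mem_allseqs h1 eqxx h2.
Qed.

Lemma gens_uniq s : uniq (gens s).
Proof. by rewrite sort_uniq undup_uniq. Qed.

Lemma take_gens s i g : i < size (gens s) ->
  (g \in take i (gens s)) = (g \in gens s) && ltm (nth mone (gens s) i) g.
Proof.
move=> isz; set us := gens s.
have so : sorted geR us := sort_sorted geR_total _.
have un : uniq us := gens_uniq s.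
have le : forall j k, j < size us -> k < size us -> j <= k -> geR (nth mone us j) (nth mone us k).
  by move=> j k hj hk hjk; apply: (sorted_leq_nth geR_trans geR_refl mone so).
case gin: (g \in us); last first.
  by apply/negbTE; apply: contra (negbT gin); apply: mem_take.
rewrite in_take //=.
have jsz : index g us < size us by rewrite index_mem.
have nj : nth mone us (index g us) = g by apply: nth_index.
apply/idP/idP => [hji|hlt].
  have h := le _ _ jsz isz (ltnW hji); rewrite nj in h.
  have hne : g != nth mone us i.
    rewrite -nj nth_uniq //; by rewrite neq_ltn hji.
  case/orP: (ltm_total hne) => // hh; by rewrite /geR hh in h.
rewrite ltnNge; apply/negP => hij.
have h := le _ _ isz jsz hij; rewrite nj in h.
by rewrite /geR hlt in h.
Qed.

Theorem proposition5p2 (s : nat) : 2 <= s -> has_linear_quotients (in_edge_ideal_pow s).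
Proof.
move=> s2; exists (gens s); split.
- exact: gens_uniq.
- by move=> m; rewrite min_genE; exact: mem_gens.
move=> i /andP[i0 isz]; set u := nth mone (gens s) i.
have uin : u \in gens s := mem_nth _ isz.
have [Gu Du] := proj1 (isprodE s u) (proj1 (mem_gens s u) uin).
exists [set l | has (fun g => mdivb g (mmul (var l) u)) (take i (gens s))] => m; split.
  case=> g gin Hd.
  move: gin; rewrite take_gens // => /andP[gin lt].
  have [Gg Dg] := proj1 (isprodE s g) (proj1 (mem_gens s g) gin).
  have [l [k [h1 h2 h3 h4 h5]]] := exch Gu Gg Du Dg s2 lt.
  exists l.
    rewrite inE; apply/hasP; exists (swap u l k).
      rewrite take_gens // h5 andbT; apply/mem_gens/isprodE; split => //.
    apply/mdivbP => j; rewrite /swap !ffunE [u j + _]addnC; exact: leq_subr.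
  by have := Hd l; rewrite mmulE; lia.
case=> k; rewrite inE => /hasP [g gin /mdivbP hd] mk.
exists g => // j; have := hd j; rewrite !mmulE ffunE.
case: (eqVneq j k) => [->|_] /=; lia.
Qed.
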